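(* Let $Q = R_0(u_0) \leftarrow A_1 \wedge \cdots \wedge A_m$ be a conjunctive query with $var(Q)=\{X_1,\ldots,X_k\}$, equipped with an arbitrary set of functional dependencies on its relations, and assume $Q=chase(Q)$. Let $s(Q)$ be the optimal value of the following linear program in the $2^k$ real variables $h(S)$, $S\subseteq[k]$ (with $h(\emptyset)=0$): \begin{align*} \text{maximize } \quad & h(u_0)\\ \text{subject to } \quad & h(u_i)\le 1 \quad \text{for all } i=1,\ldots,m,\\ & h(\{t\}\mid\{i_1,\ldots,i_j\})=0 \quad \text{for each induced dependency } X_{i_1},\ldots,X_{i_j}\to X_t \text{ in } F(Q),\\ & h(\{i\}\mid [k]\setminus\{i\})\ge 0 \quad \text{for all } i\in[k],\\ & I(i;j\mid S)\ge 0 \quad \text{for all } i\neq j\in[k] \text{ and } S\subseteq[k]\setminus\{i,j\}. \end{align*} Then for every database $D$ (with nonempty relations) satisfying the functional dependencies, $|Q(D)|\le \mathrm{rmax}(Q,D)^{s(Q)}$.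
   Context: A conjunctive query has the form $Q = R_0(u_0)\leftarrow A_1\wedge\cdots\wedge A_m$, where each body atom is $A_i=R_{j(i)}(u_i)$ for a relation name $R_{j(i)}$ among $R_1,\ldots,R_n$ (a relation name may occur in several atoms, so $m\ge n$), each $u_i$ is a list of (not necessarily distinct) variables of length equal to the arity of $R_{j(i)}$, and every variable of the head list $u_0$ occurs in some $u_i$, $i\ge1$. $var(Q)$ is the set of all variables of $Q$. A database $D$ consists of a finite universe $U$ and a finite relation $R_j^D$ over $U$ for each relation name. The answer $Q(D)$ is the set of tuples $\theta(u_0)$ over all maps $\theta: var(Q)\to U$ such that $\theta(u_i)\in R_{j(i)}^D$ for every $i\ge1$. $\mathrm{rmax}(Q,D)$ denotes the number of tuples in the largest of the relations $R_1^D,\ldots,R_n^D$. A functional dependency (FD) $V\to a$ on a relation $R$, where $V$ is a set of attribute positions of $R$ and $a$ a position, is satisfied by $D$ if any two tuples of $R^D$ agreeing on all positions in $V$ also agree on position $a$. Each FD $V\to a$ on $R$ and each body atom $R(u)$ induce the dependency among query variables $\{u[p]:p\in V\}\to u[a]$; $F(Q)$ denotes the set of all such induced dependencies. $Q=chase(Q)$ means: no atom occurs twice in the body, and for every relation $R$, every FD $V\to a$ on $R$ and every two body atoms $R(u),R(u')$, if $u[p]=u'[p]$ for all $p\in V$ then $u[a]=u'[a]$. Linear-program notation: for a variable list $u$, $h(u)$ means $h(S_u)$ where $S_u\subseteq[k]$ is the set of indices of variables occurring in $u$. For $A,B\subseteq[k]$, $h(A\mid B):=h(A\cup B)-h(B)$,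 and $I(i;j\mid S):=h(\{i\}\cup S)+h(\{j\}\cup S)-h(S)-h(\{i,j\}\cup S)$. (These constraints are the Shannon information inequalities with $h(S)$ playing the role of the joint entropy of $\{X_s: s\in S\}$.) *)

(* Defs.v *)
From Stdlib Require Import Reals.
From mathcomp Require Import all_boot.
Set Implicit Arguments. Unset Strict Implicit. Unset Printing Implicit Defensive.

(* Variables of the query are X_1..X_k, represented by 'I_k.
   Relation names R_1..R_n are represented by 'I_n, with arity ar j.
   A body atom R_j(u) is a dependent pair (j, u) with u : (ar j).-tuple 'I_k. *)
Definition atom (k n : nat) (ar : 'I_n -> nat) : Type :=
  {j : 'I_n & (ar j).-tuple 'I_k}.

Definition atom_vars k n (ar : 'I_n -> nat) (A : atom k ar) : {set 'I_k} :=
  [set x in val (tagged A)].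

(* An arbitrary set of functional dependencies: F j V a means that
   V -> a (V a set of positions, a a position) is an FD on relation R_j. *)
Definition fds (n : nat) (ar : 'I_n -> nat) : Type :=
  forall j : 'I_n, {set 'I_(ar j)} -> 'I_(ar j) -> Prop.

Definition db (n : nat) (ar : 'I_n -> nat) (U : finType) : Type :=
  forall j : 'I_n, {set (ar j).-tuple U}.

Definition db_sat_fds n (ar : 'I_n -> nat) (U : finType) (F : fds ar) (D : db ar U) : Prop :=
  forall j V a, F j V a -> forall t t', t \in D j -> t' \in D j ->
    (forall p, p \in V -> tnth t p = tnth t' p) -> tnth t a = tnth t' a.

(* Q = chase(Q): no repeated atom, and the FDs are already enforced on the
   variable tuples of any two atoms over the same relation. *)
Definition is_chased k n (ar : 'I_n -> nat) (F : fds ar) (body : seq (atom k ar)) : Prop :=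
  uniq body /\
  forall j V a, F j V a -> forall t t' : (ar j).-tuple 'I_k,
    (existT _ j t : atom k ar) \in body -> (existT _ j t' : atom k ar) \in body ->
    (forall p, p \in V -> tnth t p = tnth t' p) -> tnth t a = tnth t' a.

Definition holds k n (ar : 'I_n -> nat) (U : finType) (body : seq (atom k ar))
  (D : db ar U) (theta : {ffun 'I_k -> U}) : bool :=
  all (fun A => map_tuple theta (tagged A) \in D (tag A)) body.

Definition answer k n (ar : 'I_n -> nat) (U : finType) (a0 : nat) (u0 : a0.-tuple 'I_k)
  (body : seq (atom k ar)) (D : db ar U) : {set a0.-tuple U} :=
  [set map_tuple theta u0 | theta : {ffun 'I_k -> U} in [pred theta | holds body D theta]].

Definition rmax n (ar : 'I_n -> nat) (U : finType) (D : db ar U) : nat :=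
  \max_(j < n) #|D j|.

Definition mutinf k (h : {set 'I_k} -> R) (i j : 'I_k) (S : {set 'I_k}) : R :=
  Rminus (Rminus (Rplus (h (i |: S)) (h (j |: S))) (h S)) (h (i |: (j |: S))).

(* feasibility for the linear program; the induced dependency
   {u[p] : p in V} -> u[a} of an FD V -> a on relation tag A and atom A gives
   h({u[a]} | {u[p] : p in V}) = 0. *)
Definition lp_feasible k n (ar : 'I_n -> nat) (F : fds ar) (body : seq (atom k ar))
  (h : {set 'I_k} -> R) : Prop :=
  h set0 = R0 /\
  (forall A, A \in body -> Rle (h (atom_vars A)) R1) /\
  (forall A, A \in body -> forall V a, F (tag A) V a ->
     Rminus (h ([set tnth (tagged A) a] :|: [set tnth (tagged A) p | p in V]))
            (h [set tnth (tagged A) p | p in V]) = R0) /\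
  (forall i : 'I_k, Rle R0 (Rminus (h setT) (h (setT :\ i)))) /\
  (forall (i j : 'I_k) (S : {set 'I_k}), i != j -> i \notin S -> j \notin S ->
     Rle R0 (mutinf h i j S)).

Definition lp_opt k n (ar : 'I_n -> nat) (F : fds ar) (body : seq (atom k ar))
  (a0 : nat) (u0 : a0.-tuple 'I_k) (s : R) : Prop :=
  (exists h, lp_feasible F body h /\ h [set x in val u0] = s) /\
  (forall h, lp_feasible F body h -> Rle (h [set x in val u0]) s).

(* Main.v *)
Require Import Defs.
From Stdlib Require Import Reals Lra.
From HB Require Import structures.
From mathcomp Require Import all_boot.
Set Implicit Arguments. Unset Strict Implicit. Unset Printing Implicit Defensive.

HB.instance Definition _ := Monoid.isComLaw.Build R R0 Rplus
  (fun a b c => esym (Rplus_assoc a b c)) Rplus_comm Rplus_0_l.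

Local Notation "\rsum_ ( i 'in' A ) F" := (\big[Rplus/R0]_(i in A) F)
  (at level 41, F at level 41, i, A at level 50).

Local Open Scope R_scope.

Lemma sumR_le (I : finType) (A : {pred I}) (F G : I -> R) :
  (forall i, i \in A -> F i <= G i) -> \rsum_(i in A) F i <= \rsum_(i in A) G i.
Proof.
move=> H; apply: (big_ind2 (fun x y => x <= y)) => //.
- exact: Rle_refl.
- by move=> a b c d; apply: Rplus_le_compat.
Qed.

Lemma sumR_const (I : finType) (A : {pred I}) (x : R) :
  \rsum_(i in A) x = INR #|A| * x.
Proof.
rewrite big_const; elim: #|A| => [|n IH]; first by rewrite /= Rmult_0_l.
rewrite iterS IH S_INR; ring.
Qed.

Lemma sumR_mull (I : finType) (A : {pred I}) (F : I -> R) (c : R) :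
  c * (\rsum_(i in A) F i) = \rsum_(i in A) (c * F i).
Proof.
apply: (big_rec2 (fun x y => c * x = y)); first by rewrite Rmult_0_r.
by move=> i y1 y2 _ <-; ring.
Qed.

Lemma sumR_mulr (I : finType) (A : {pred I}) (F : I -> R) (c : R) :
  (\rsum_(i in A) F i) * c = \rsum_(i in A) (F i * c).
Proof.
rewrite Rmult_comm sumR_mull; apply: eq_bigr => i _; ring.
Qed.

Lemma sumR_add (I : finType) (A : {pred I}) (F G : I -> R) :
  \rsum_(i in A) (F i + G i) = \rsum_(i in A) F i + \rsum_(i in A) G i.
Proof. exact: big_split. Qed.

Lemma sumR_opp (I : finType) (A : {pred I}) (F : I -> R) :
  \rsum_(i in A) (- F i) = - (\rsum_(i in A) F i).
Proof.
have -> : - (\rsum_(i in A) F i) = (-1) * (\rsum_(i in A) F i) by ring.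
rewrite sumR_mull; apply: eq_bigr => i _; ring.
Qed.

Lemma sumR_ind (I : finType) (A : {set I}) (P : pred I) (x : R) :
  \rsum_(i in A) (if P i then x else R0) = INR #|[set i in A | P i]| * x.
Proof.
rewrite -big_mkcondr -sumR_const; apply: eq_bigl => i; by rewrite inE.
Qed.

Lemma sumR_cond (I : finType) (A : {set I}) (P : pred I) (F : I -> R) :
  \rsum_(i in A) (if P i then F i else R0) = \rsum_(i in [set i in A | P i]) F i.
Proof.
rewrite -big_mkcondr; apply: eq_bigl => i; by rewrite inE.
Qed.

Lemma sumR_ge0 (I : finType) (A : {pred I}) (F : I -> R) :
  (forall i, i \in A -> 0 <= F i) -> 0 <= \rsum_(i in A) F i.
Proof.
move=> H; apply: (big_ind (fun x => 0 <= x)) => //; first exact: Rle_refl.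
by move=> a b; apply: Rplus_le_le_0_compat.
Qed.

Lemma INR_pos n : (0 < n)%N -> 0 < INR n.
Proof. by move=> /ltP H; apply: lt_0_INR. Qed.

Lemma INR_leq m n : (m <= n)%N -> INR m <= INR n.
Proof. by move=> /leP H; apply: le_INR. Qed.

Lemma sum_inv_le (I : finType) (C : {set I}) (w : I -> nat) :
  (forall i, i \in C -> (#|C| <= w i)%N) -> \rsum_(i in C) / INR (w i) <= 1.
Proof.
move=> H; have [C0|Cpos] := posnP #|C|.
  rewrite big_pred0; first lra.
  by move=> i; apply/negbTE; move: C0 => /eqP; rewrite cards_eq0 => /eqP ->; rewrite inE.
have HC := INR_pos Cpos.
apply: (Rle_trans _ (\rsum_(i in C) / INR #|C|)).
  apply: sumR_le => i Hi; apply: Rinv_le_contravar => //; exact: INR_leq (H i Hi).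
rewrite sumR_const; right; field; lra.
Qed.

Lemma ln_le_sub1 y : 0 < y -> ln y <= y - 1.
Proof. move=> Hy; have := exp_ineq1_le (ln y); rewrite exp_ln //; lra. Qed.

Section Entropy.
Variables (k : nat) (U : finType) (T : {set {ffun 'I_k -> U}}).
Hypothesis TN : (0 < #|T|)%N.
Local Notation X := {ffun 'I_k -> U}.

Definition ag (S : {set 'I_k}) (a b : X) : bool := [forall x in S, a x == b x].
Definition mm (S : {set 'I_k}) (a : X) : nat := #|[set b in T | ag S a b]|.
Definition HH (S : {set 'I_k}) : R :=
  ln (INR #|T|) - / INR #|T| * (\rsum_(a in T) ln (INR (mm S a))).

Lemma agxx S a : ag S a a.
Proof. by apply/forall_inP. Qed.
Lemma agC S a b : ag S a b -> ag S b a.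
Proof. by move/forall_inP=> H; apply/forall_inP=> x Hx; rewrite eq_sym H. Qed.
Lemma ag_trans S a b c : ag S a b -> ag S b c -> ag S a c.
Proof.
move/forall_inP=> H1 /forall_inP H2; apply/forall_inP=> x Hx.
by rewrite (eqP (H1 x Hx)) H2.
Qed.
Lemma ag_sub (S S' : {set 'I_k}) a b : S \subset S' -> ag S' a b -> ag S a b.
Proof.
move=> /subsetP sS /forall_inP H; apply/forall_inP=> x Hx; exact: H (sS x Hx).
Qed.
Lemma ag_U A B a b : ag A a b -> ag B a b -> ag (A :|: B) a b.
Proof.
move/forall_inP=> H1 /forall_inP H2; apply/forall_inP=> x; rewrite inE.
by case/orP; [apply: H1|apply: H2].
Qed.

Lemma mm_pos S a : a \in T -> (0 < mm S a)%N.
Proof. move=> Ha; apply/card_gt0P; exists a; by rewrite inE Ha agxx. Qed.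

Lemma mm_eq S a b : ag S a b -> mm S a = mm S b.
Proof.
move=> H; rewrite /mm; apply: eq_card => c; rewrite !inE.
case: (c \in T) => //=; apply/idP/idP => Hc.
- exact: ag_trans (agC H) Hc.
- exact: ag_trans H Hc.
Qed.

Lemma NR : 0 < INR #|T|.
Proof. exact: INR_pos. Qed.

Lemma HH0 : HH set0 = 0.
Proof.
rewrite /HH; have NR := NR.
rewrite (eq_bigr (fun _ => ln (INR #|T|))); last first.
  move=> a _; congr (ln (INR _)); apply: eq_card => b; rewrite !inE.
  by rewrite /ag; apply: andb_idr => _; apply/forall_inP => x; rewrite inE.
rewrite sumR_const; field; lra.
Qed.

Lemma HH_mono (S S' : {set 'I_k}) : S \subset S' -> HH S <= HH S'.
Proof.
move=> sS; rewrite /HH.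
have NR := NR; have := Rinv_0_lt_compat _ NR => NI.
suff : \rsum_(a in T) ln (INR (mm S' a)) <= \rsum_(a in T) ln (INR (mm S a)).
  move=> H; have := Rmult_le_compat_l _ _ _ (Rlt_le _ _ NI) H; lra.
apply: sumR_le => a Ha.
have h1 := INR_pos (mm_pos S' Ha).
have : INR (mm S' a) <= INR (mm S a).
  apply: INR_leq; apply: subset_leq_card; apply/subsetP => b; rewrite !inE.
  by case/andP=> -> /(ag_sub sS) ->.
case=> [Hl|->]; last exact: Rle_refl.
by apply: Rlt_le; apply: ln_increasing.
Qed.

Lemma HH_eq (S S' : {set 'I_k}) : (forall a, a \in T -> mm S a = mm S' a) -> HH S = HH S'.
Proof. by move=> H; rewrite /HH (eq_bigr _ (fun a Ha => congr1 (fun n => ln (INR n)) (H a Ha))). Qed.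

Lemma HH_inj S : (forall a b, a \in T -> b \in T -> ag S a b -> a = b) ->
  HH S = ln (INR #|T|).
Proof.
move=> H; rewrite /HH.
rewrite (eq_bigr (fun _ => 0)); last first.
  move=> a Ha; suff -> : mm S a = 1%N by rewrite /= ln_1.
  rewrite /mm -(cards1 a); apply: eq_card => b; rewrite !inE.
  apply/andP/eqP => [[Hb Hab]|->]; first by rewrite (H a b Ha Hb Hab).
  by rewrite Ha agxx.
rewrite sumR_const; ring.
Qed.

(* bound by number of classes *)
Lemma HH_le S (Kr : R) : 0 < Kr ->
  \rsum_(a in T) / INR (mm S a) <= Kr -> HH S <= ln Kr.
Proof.
move=> HK Hs; rewrite /HH; have NR := NR.
set N := INR #|T|.
have key : \rsum_(a in T) (ln N - ln (INR (mm S a)) - ln Kr) <=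
           \rsum_(a in T) (N * / Kr * / INR (mm S a) - 1).
  apply: sumR_le => a Ha.
  have hm := INR_pos (mm_pos S Ha).
  have -> : ln N - ln (INR (mm S a)) - ln Kr = ln (N * / (INR (mm S a) * Kr)).
    rewrite ln_mult //; last by apply: Rinv_0_lt_compat; apply: Rmult_lt_0_compat.
    rewrite ln_Rinv; last by apply: Rmult_lt_0_compat.
    rewrite ln_mult //; ring.
  have -> : N * / Kr * / INR (mm S a) = N * / (INR (mm S a) * Kr).
    rewrite Rinv_mult; ring.
  apply: ln_le_sub1; apply: Rmult_lt_0_compat => //.
  by apply: Rinv_0_lt_compat; apply: Rmult_lt_0_compat.
move: key; rewrite !sumR_add !sumR_opp !sumR_const -sumR_mull.
move=> key.
have h2 : N * / Kr * (\rsum_(a in T) / INR (mm S a)) <= N * / Kr * Kr.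
  apply: Rmult_le_compat_l => //; apply: Rlt_le; apply: Rmult_lt_0_compat => //.
  exact: Rinv_0_lt_compat.
have h3 : N * / Kr * Kr = N by field; lra.
set L := \rsum_(a in T) ln (INR (mm S a)) in key *.
rewrite -/N in key.
set M := \rsum_(a in T) / INR (mm S a) in key h2.
set P := N * / Kr * M in key h2.
set P2 := N * / Kr * Kr in h2 h3.
have NRN : 0 < N := NR.
clearbody P P2 M L N.
have : N * ln N - L <= N * ln Kr by lra.
move=> h4.
have -> : ln N - / N * L = / N * (N * ln N - L) by field; lra.
have -> : ln Kr = / N * (N * ln Kr) by field; lra.
apply: Rmult_le_compat_l => //; apply: Rlt_le; exact: Rinv_0_lt_compat.
Qed.


Lemma count_bound (Y : finType) (f : X -> Y) (Dj : {set Y}) (S : {set 'I_k}) :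
  (forall a, a \in T -> f a \in Dj) ->
  (forall a b, a \in T -> b \in T -> ag S a b = (f a == f b)) ->
  \rsum_(a in T) / INR (mm S a) <= INR #|Dj|.
Proof.
move=> Hf Hag.
rewrite (eq_bigr (fun a => \rsum_(y in Dj) (if f a == y then / INR (mm S a) else R0))); last first.
  move=> a Ha; rewrite sumR_ind.
  have -> : #|[set y in Dj | f a == y]| = 1%N.
    rewrite -(cards1 (f a)); apply: eq_card => y; rewrite !inE.
    apply/andP/eqP => [[_ /eqP <-]|->] //; by rewrite Hf // eqxx.
  by rewrite /= Rmult_1_l.
rewrite exchange_big /=.
rewrite -(Rmult_1_r (INR #|Dj|)) -sumR_const.
apply: sumR_le => y Hy.
rewrite sumR_cond; apply: sum_inv_le => a; rewrite inE => /andP [Ha /eqP Hay].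
apply: subset_leq_card; apply/subsetP => b; rewrite !inE => /andP [Hb /eqP Hby].
by rewrite Hb Hag // Hay Hby eqxx.
Qed.

Lemma inner_bound (S A B E : {set 'I_k}) a b :
  S \subset A -> S \subset B -> E \subset A :|: B -> a \in T ->
  \rsum_(t in T) (if ag A t a && ag B t b then / (INR (mm S t) * INR (mm E t)) else R0)
   <= (if ag S a b then / INR (mm S a) else R0).
Proof.
move=> sA sB sE Ha; rewrite sumR_cond.
case: ifP => Hab.
- have hS := INR_pos (mm_pos S Ha).
  rewrite (eq_bigr (fun t => / INR (mm S a) * / INR (mm E t))); last first.
    move=> t; rewrite inE => /andP [Ht /andP [HA HB]].
    by rewrite (mm_eq (ag_sub sA HA)) Rinv_mult.
  rewrite -sumR_mull -[X in _ <= X]Rmult_1_r.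
  apply: Rmult_le_compat_l; first by apply: Rlt_le; apply: Rinv_0_lt_compat.
  apply: sum_inv_le => t; rewrite inE => /andP [Ht /andP [HA HB]].
  apply: subset_leq_card; apply/subsetP => t'; rewrite !inE => /andP [Ht' /andP [HA' HB']].
  rewrite Ht' /=; apply: (ag_sub sE); apply: ag_U.
  + exact: ag_trans HA (agC HA').
  + exact: ag_trans HB (agC HB').
- rewrite big1; first exact: Rle_refl.
  move=> t; rewrite inE => /andP [Ht /andP [HA HB]].
  have : ag S a b := ag_trans (agC (ag_sub sA HA)) (ag_sub sB HB).
  by rewrite Hab.
Qed.

Lemma HH_submod (S A B E : {set 'I_k}) :
  S \subset A -> S \subset B -> E \subset A :|: B ->
  0 <= HH A + HH B - HH S - HH E.
Proof.
move=> sA sB sE; have NR := NR.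
pose q := fun t => INR (mm A t) * INR (mm B t) * / (INR (mm S t) * INR (mm E t)).
have Hq : \rsum_(t in T) q t <= INR #|T|.
  have e1 : forall t, t \in T -> q t = \rsum_(a in T) \rsum_(b in T)
       (if ag A t a && ag B t b then / (INR (mm S t) * INR (mm E t)) else R0).
    move=> t Ht; rewrite /q /mm.
    rewrite -(Rmult_1_r (INR #|[set b in T | ag A t b]|)) -(sumR_ind T (ag A t)).
    rewrite -(Rmult_1_r (INR #|[set b in T | ag B t b]|)) -(sumR_ind T (ag B t)).
    rewrite Rmult_assoc sumR_mulr; apply: eq_bigr => a _.
    rewrite sumR_mulr sumR_mull; apply: eq_bigr => b _.
    by case: (ag A t a); case: (ag B t b) => /=; ring.
  rewrite (eq_bigr _ e1) exchange_big.
  apply: (Rle_trans _ (\rsum_(a in T) \rsum_(b in T) (if ag S a b then / INR (mm S a) else R0))).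
    apply: sumR_le => a Ha; rewrite exchange_big; apply: sumR_le => b Hb.
    exact: inner_bound.
  right; rewrite -(Rmult_1_r (INR #|T|)) -sumR_const; apply: eq_bigr => a Ha.
  rewrite sumR_ind -/(mm S a); have := INR_pos (mm_pos S Ha) => h; field; lra.
have Hterm : forall t, t \in T -> 1 + - q t <=
    ln (INR (mm S t)) + ln (INR (mm E t)) + - ln (INR (mm A t)) + - ln (INR (mm B t)).
  move=> t Ht.
  have hA := INR_pos (mm_pos A Ht); have hB := INR_pos (mm_pos B Ht).
  have hS := INR_pos (mm_pos S Ht); have hE := INR_pos (mm_pos E Ht).
  have hSE : 0 < INR (mm S t) * INR (mm E t) by apply: Rmult_lt_0_compat.
  have hq : 0 < q t.
    apply: Rmult_lt_0_compat; first by apply: Rmult_lt_0_compat.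
    exact: Rinv_0_lt_compat.
  have := ln_le_sub1 hq.
  have -> : ln (q t) = ln (INR (mm A t)) + ln (INR (mm B t)) - ln (INR (mm S t)) - ln (INR (mm E t)).
    rewrite /q ln_mult; [|by apply: Rmult_lt_0_compat|by apply: Rinv_0_lt_compat].
    rewrite ln_mult // ln_Rinv // ln_mult //; ring.
  lra.
have Hs := sumR_le Hterm.
rewrite !sumR_add !sumR_opp sumR_const in Hs.
rewrite /HH.
set LA := \rsum_(a in T) ln (INR (mm A a)) in Hs *.
set LB := \rsum_(a in T) ln (INR (mm B a)) in Hs *.
set LS := \rsum_(a in T) ln (INR (mm S a)) in Hs *.
set LE := \rsum_(a in T) ln (INR (mm E a)) in Hs *.
set Q := \rsum_(t in T) q t in Hq Hs.
set N := INR #|T| in NR Hq Hs *.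
clearbody LA LB LS LE Q N.
have -> : ln N - / N * LA + (ln N - / N * LB) - (ln N - / N * LS) - (ln N - / N * LE)
          = / N * (LS + LE + - LA + - LB) by ring.
apply: Rmult_le_pos; first by apply: Rlt_le; apply: Rinv_0_lt_compat.
lra.
Qed.
End Entropy.

Lemma ln_nat_ge0 n : 0 <= ln (INR n).
Proof.
case: n => [|n].
  rewrite /ln; case: Rlt_dec => H; [by case: (Rlt_irrefl _ H)|exact: Rle_refl].
rewrite -ln_1; have h := lt_0_INR n.+1 (Nat.lt_0_succ n).
have h1 : 1 <= INR n.+1 by rewrite S_INR; have := pos_INR n; lra.
case: (Rle_lt_or_eq_dec _ _ h1) => [hl|<-]; last exact: Rle_refl.
apply: Rlt_le; apply: ln_increasing => //; lra.
Qed.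

Lemma ln_mono x y : 0 < x -> x <= y -> ln x <= ln y.
Proof.
move=> hx; case/Rle_lt_or_eq_dec => [hl|<-]; last exact: Rle_refl.
apply: Rlt_le; exact: ln_increasing.
Qed.

Lemma ag_tuple k (U : finType) m (u : m.-tuple 'I_k) (a b : {ffun 'I_k -> U}) :
  ag [set x in val u] a b = (map_tuple a u == map_tuple b u).
Proof.
apply/forall_inP/eqP => [H|H].
- apply: val_inj => /=; apply/eq_in_map => x Hx; apply/eqP; apply: H; by rewrite inE.
- move=> x; rewrite inE => Hx; apply/eqP.
  have : [seq a i | i <- val u] = [seq b i | i <- val u] by move: (congr1 val H).
  by move/eq_in_map; apply.
Qed.

Theorem theorem1 (k n : nat) (ar : 'I_n -> nat) (F : fds ar)
  (body : seq (atom k ar)) (a0 : nat) (u0 : a0.-tuple 'I_k)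
  (Hrel : forall j : 'I_n, exists2 A, A \in body & tag A = j)
  (Hvars : forall x : 'I_k, exists2 A, A \in body & x \in atom_vars A)
  (Hchase : is_chased F body)
  (s : R) (Hs : lp_opt F body u0 s)
  (U : finType) (D : db ar U) (HD : db_sat_fds F D)
  (Hne : forall j : 'I_n, D j != set0) :
  Rle (INR #|answer u0 body D|) (Rpower (INR (rmax D)) s).
Proof.
set Ans := answer u0 body D.
have [A0|Apos] := posnP #|Ans|.
  rewrite A0 /Rpower /=; apply: Rlt_le; exact: exp_pos.
have [t0 Ht0] : exists t0, t0 \in Ans by apply/card_gt0P.
have [th0 Hth0 _] := imsetP Ht0.
pose g := fun t => odflt th0 [pick th | holds body D th && (map_tuple th u0 == t)].
have Hg : forall t, t \in Ans -> holds body D (g t) /\ map_tuple (g t) u0 = t.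
  move=> t /imsetP [th Hth ->]; move: Hth; rewrite inE => Hth.
  rewrite /g; case: pickP => [th' /andP [H1 /eqP H2]|H] //.
  by have := H th; rewrite /= Hth eqxx.
pose T := [set g t | t in Ans].
have TN : #|T| = #|Ans|.
  apply: card_in_imset => t t' Ht Ht' E.
  by rewrite -(proj2 (Hg t Ht)) -(proj2 (Hg t' Ht')) E.
have TP : (0 < #|T|)%N by rewrite TN.
have Thold : forall th, th \in T -> holds body D th.
  by move=> th /imsetP [t Ht ->]; exact: (proj1 (Hg t Ht)).
have Thold' : forall th A, th \in T -> A \in body ->
    map_tuple th (tagged A) \in D (tag A).
  by move=> th A Hth HA; move/allP: (Thold th Hth); apply.
pose r := rmax D.
pose Lr := ln (INR r).
have Lr0 : 0 <= Lr by exact: ln_nat_ge0.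
have Hatom : forall A, A \in body -> HH T (atom_vars A) <= Lr.
  move=> A HA.
  have [th Hth] : exists th, th \in T by apply/card_gt0P.
  have Dpos : (0 < #|D (tag A)|)%N.
    by apply/card_gt0P; exists (map_tuple th (tagged A)); exact: Thold'.
  have KP := INR_pos Dpos.
  apply: (Rle_trans _ (ln (INR #|D (tag A)|))).
    apply: (HH_le TP KP).
    apply: (count_bound (f := fun th => map_tuple th (tagged A))).
      by move=> a Ha; exact: Thold'.
    by move=> a b _ _; rewrite /atom_vars ag_tuple.
  apply: ln_mono => //; apply: INR_leq.
  rewrite /r /rmax; exact: (@leq_bigmax _ (fun j : 'I_n => #|D j|) (tag A)).
have Hfd : forall A, A \in body -> forall V a, F (tag A) V a ->
    HH T ([set tnth (tagged A) a] :|: [set tnth (tagged A) p | p in V])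
    = HH T [set tnth (tagged A) p | p in V].
  move=> A HA V a HF; apply: HH_eq => th Hth.
  rewrite /mm; apply: eq_card => b; rewrite !inE.
  case Hb: (b \in T) => //=.
  apply/idP/idP => Hag.
  - apply: (ag_sub _ Hag); exact: subsetUr.
  - apply: ag_U => //; apply/forall_inP => x; rewrite inE => /eqP ->; apply/eqP.
    have := HD (tag A) V a HF (map_tuple th (tagged A)) (map_tuple b (tagged A))
      (Thold' th A Hth HA) (Thold' b A Hb HA).
    rewrite !tnth_map; apply => p Hp; rewrite !tnth_map; apply/eqP.
    move/forall_inP: Hag; apply; apply/imsetP; by exists p.
have Hfeas : forall c, 0 <= c -> c * Lr <= 1 -> lp_feasible F body (fun S => c * HH T S).
  move=> c c0 cL; split; [|split; [|split; [|split]]].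
  - by rewrite HH0 // Rmult_0_r.
  - move=> A HA; apply: (Rle_trans _ (c * Lr)) => //.
    by apply: Rmult_le_compat_l => //; apply: Hatom.
  - move=> A HA V a HF; rewrite (Hfd A HA V a HF); ring.
  - move=> i; have h := HH_mono TP (subsetT (setT :\ i)).
    have -> : c * HH T setT - c * HH T (setT :\ i) = c * (HH T setT - HH T (setT :\ i)) by ring.
    apply: Rmult_le_pos => //; by apply: Rge_le; apply: Rge_minus; apply: Rle_ge.
  - move=> i j S _ _ _; rewrite /mutinf.
    have h := HH_submod (S := S) (A := i |: S) (B := j |: S) (E := i |: (j |: S)) TP
      (subsetUr _ _) (subsetUr _ _).
    have h' : i |: (j |: S) \subset (i |: S) :|: (j |: S).
      apply/subsetP => x; rewrite !inE => /or3P [->|->|->]; by rewrite ?orbT.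
    move: (h h') => {h h'} h.
    have -> : c * HH T (i |: S) + c * HH T (j |: S) - c * HH T S - c * HH T (i |: (j |: S))
      = c * (HH T (i |: S) + HH T (j |: S) - HH T S - HH T (i |: (j |: S))) by ring.
    exact: Rmult_le_pos.
have Hval : forall c, 0 <= c -> c * Lr <= 1 -> c * ln (INR #|Ans|) <= s.
  move=> c c0 cL; rewrite -TN.
  have := proj2 Hs _ (Hfeas c c0 cL); rewrite HH_inj //.
  move=> a b /imsetP [t Ht ->] /imsetP [t' Ht' ->]; rewrite ag_tuple => /eqP E.
  by rewrite -(proj2 (Hg t Ht)) -(proj2 (Hg t' Ht')) E.
have NP : 0 < INR #|Ans| by exact: INR_pos.
have key : ln (INR #|Ans|) <= s * Lr.
  case: (Rle_lt_or_eq_dec _ _ Lr0) => [LP|L0].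
  - have := Hval (/ Lr) (Rlt_le _ _ (Rinv_0_lt_compat _ LP)) (ltac:(right; field; lra)).
    move=> h; have := Rmult_le_compat_l _ _ _ (Rlt_le _ _ LP) h.
    have -> : Lr * (/ Lr * ln (INR #|Ans|)) = ln (INR #|Ans|) by field; lra.
    lra.
  - rewrite -L0 Rmult_0_r.
    case: (Rle_or_lt (ln (INR #|Ans|)) 0) => // lp.
    have c0 : 0 <= (Rabs s + 1) / ln (INR #|Ans|).
      apply: Rlt_le; apply: Rdiv_lt_0_compat => //; have := Rabs_pos s; lra.
    have := Hval _ c0 (ltac:(rewrite -L0; lra)).
    have -> : (Rabs s + 1) / ln (INR #|Ans|) * ln (INR #|Ans|) = Rabs s + 1 by field; lra.
    have := Rle_abs s; lra.
rewrite /Rpower -/r -/Lr -(exp_ln _ NP).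
case: (Rle_lt_or_eq_dec _ _ key) => [hl|->]; last exact: Rle_refl.
by apply: Rlt_le; apply: exp_increasing.
Qed.
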